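(* Let $h_C,h_A:S\to\mathbb R_{\ge0}\cup\{\infty\}$ be two admissible (static) heuristics for $\mathcal T$, and let $h_{\mathrm{lazy}}$ be the lazy evaluation heuristic over the information source $\sigma_{\mathrm{lazy}}$. Then Dynamic A* with \texttt{reeval} set to true using $h_{\mathrm{lazy}}$ returns optimal solutions: whenever it returns a path, it is a solution of $\mathcal T$ of minimal cost.
   Context: A transition system is $\mathcal T=\langle S,L,c,T,s_I,S_G\rangle$ with finite states $S$, finite labels $L$, cost function $c:L\to\mathbb R_{\ge0}$, transitions $T\subseteq S\times L\times S$, initial state $s_I$, goal states $S_G\subseteq S$; $h^*(s)$ is the minimal cost of a path from $s$ to a goal ($\infty$ if none). A static heuristic $h:S\to\mathbb R_{\ge0}\cup\{\infty\}$ is admissible if $h(s)\le h^*(s)$ for all $s$. An information source $\sigma$ consists of a set $\mathcal I_\sigma$, $\iota_0^\sigma\in\mathcal I_\sigma$, $\mathrm{update}_\sigma:\mathcal I_\sigma\times T\to\mathcal I_\sigma$, $\mathrm{refine}_\sigma:\mathcal I_\sigma\times S\to\mathcal I_\sigma$. A dynamic heuristic over $\sigma$ is a function $h:S\times\mathcal I_\sigma\to\mathbb R_{\ge0}\cup\{\infty\}$. The source $\sigma_{\mathrm{lazy}}$: $\mathcal I_{\sigma_{\mathrm{lazy}}}$ is the set of functions $\iota:S\to\{C,A\}$; $\iota_0=\{s\mapsto C\mid s\in S\}$; $\mathrm{update}(\iota,t)=\iota$; $\mathrm{refine}(\iota,s)=\iota'$ where $\iota'$ agrees with $\iota$ except $\iota'(s)=A$.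 The lazy evaluation heuristic is $h_{\mathrm{lazy}}(s,\iota)=h_{\iota(s)}(s)$. Parent source $\sigma_p$: $\mathcal I_{\sigma_p}$ = partial functions $S\rightharpoonup\mathbb R_{\ge0}\times(T\cup\{\bot\})$; $\iota_0=\{s_I\mapsto\langle0,\bot\rangle\}$; refine is the identity; $\mathrm{update}(\iota,\langle s,\ell,s'\rangle)$ with $\iota(s)=\langle g,\cdot\rangle$ changes only $s'$, setting it to $\langle g+c(\ell),\langle s,\ell,s'\rangle\rangle$ if $\iota(s')$ is undefined or has $g$-component $\ge g+c(\ell)$, otherwise unchanged. Dynamic A* takes $\mathcal T$, sources $\sigma_p,\sigma_h$, a dynamic heuristic $h$ over $\sigma_h$ and a Boolean flag \texttt{reeval}. Notation: at any moment $g(s)$ is the $g$-component of the current $\mathcal I(\sigma_p)(s)$ and $h(s)$ denotes $h(s,\mathcal I(\sigma_h))$ for the current $\mathcal I(\sigma_h)$. Open is a priority queue of entries $\langle s,g,h\rangle$ (duplicates allowed), popped by minimal stored value $g+h$ (ties arbitrary). Algorithm: 1. $\mathcal I(\sigma):=\iota_0^\sigma$ for both sources; $S_{\mathrm{known}}:=\{s_I\}$; Closed $:=\emptyset$; Open empty. If $h(s_I)<\infty$ insert $\langle s_I,g(s_I),h(s_I)\rangle$. 2. While Open is nonempty: pop an entry $\langle s,\hat g,\hat h\rangle$ of minimal $\hat g+\hat h$. If $s\in$ Closed, continue with the next iteration. Otherwise set $\mathcal I(\sigma):=\mathrm{refine}_\sigma(\mathcal I(\sigma),s)$ for both sources. If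 \texttt{reeval} is true and $\hat h<h(s)$: if $h(s)<\infty$ insert $\langle s,g(s),h(s)\rangle$; continue with the next iteration (this is a re-evaluation). Otherwise add $s$ to Closed ($s$ is expanded). If $s\in S_G$, return the path obtained by following the parent pointers of $\mathcal I(\sigma_p)$ from $s$ back to $s_I$. Otherwise, for each $t=\langle s,\ell,s'\rangle\in T$ in some order: let $old:=g(s')$ if $s'\in S_{\mathrm{known}}$ and undefined otherwise; set $\mathcal I(\sigma):=\mathrm{update}_\sigma(\mathcal I(\sigma),t)$ for both sources; add $s'$ to $S_{\mathrm{known}}$; if $h(s')=\infty$ skip $s'$; else if $old$ is undefined insert $\langle s',g(s'),h(s')\rangle$; else if $old>g(s')$, remove $s'$ from Closed if it is there (reopening) and insert $\langle s',g(s'),h(s')\rangle$. 3. Return ''unsolvable''. *)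

(* Defs.v *)
From mathcomp Require Import all_boot.
From Stdlib Require Import Reals.
From Stdlib Require List.

Set Implicit Arguments.
Unset Strict Implicit.
Unset Printing Implicit Defensive.

(* Extended non-negative values R_{>=0} U {oo}: [Some x] is the real x,
   [None] is oo. *)

Section DynamicAStar.

Variables (S L : finType) (c : L -> R) (T : {set S * L * S})
          (sI : S) (SG : {set S}).

Definition trans : Type := (S * L * S)%type.
Definition src (t : trans) : S := t.1.1.
Definition lbl (t : trans) : L := t.1.2.
Definition tgt (t : trans) : S := t.2.

Fixpoint is_path (s : S) (p : seq trans) : Prop :=
  match p with
  | [::] => True
  | t :: p' => t \in T /\ src t = s /\ is_path (tgt t) p'
  end.

Definition path_end (s : S) (p : seq trans) : S := last s (map tgt p).

Definition cost (p : seq trans) : R :=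
  List.fold_right (fun t acc => (c (lbl t) + acc)%R) 0%R p.

Definition is_solution_from (s : S) (p : seq trans) : Prop :=
  is_path s p /\ path_end s p \in SG.

Definition is_solution (p : seq trans) : Prop := is_solution_from sI p.

Definition optimal_solution (p : seq trans) : Prop :=
  is_solution p /\ forall q, is_solution q -> (cost p <= cost q)%R.

(* h(s) <= h*(s) = inf of the costs of the paths from s to a goal
   (oo if there is none), i.e. h(s) is below the cost of every such path. *)
Definition admissible (h : S -> option R) : Prop :=
  forall s p, is_solution_from s p -> exists x, h s = Some x /\ (x <= cost p)%R.

Definition nonneg_heuristic (h : S -> option R) : Prop :=
  forall s x, h s = Some x -> (0 <= x)%R.

Record info_source := InfoSource {
  isrc_I : Type;
  isrc_init : isrc_I;
  isrc_update : isrc_I -> trans -> isrc_I;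
  isrc_refine : isrc_I -> S -> isrc_I
}.

Inductive CA := CC | AA.

Definition sigma_lazy : info_source :=
  @InfoSource (S -> CA) (fun _ => CC) (fun i _ => i)
              (fun i s => fun s' => if s' == s then AA else i s').

Definition h_lazy (hC hA : S -> option R) (s : S) (i : S -> CA) : option R :=
  match i s with CC => hC s | AA => hA s end.

Definition pinfo : Type := S -> option (R * option trans).

Definition p_update (i : pinfo) (t : trans) : pinfo :=
  match i (src t) with
  | Some (g, _) =>
      fun x => if x == tgt t then
                 match i (tgt t) with
                 | None => Some ((g + c (lbl t))%R, Some t)
                 | Some (g', p') =>
                     if Rle_dec (g + c (lbl t)) g'
                     then Some ((g + c (lbl t))%R, Some t)
                     else Some (g', p')
                 end
               else i x
  | None => i (* unreachable: update is only applied from expanded states *)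
  end.

Definition sigma_p : info_source :=
  @InfoSource pinfo (fun s => if s == sI then Some (0%R, None) else None)
              p_update (fun i _ => i).

Definition gval (i : pinfo) (s : S) : option R := option_map fst (i s).

Section Algo.
Variables (sh : info_source) (h : S -> isrc_I sh -> option R) (reeval : bool).

Record config := Config {
  cf_Ip : pinfo;
  cf_Ih : isrc_I sh;
  cf_known : {set S};
  cf_closed : {set S};
  cf_open : seq (S * R * R) (* entries <s, g, h>, duplicates allowed *)
}.

Definition init_config : config :=
  Config (@isrc_init sigma_p) (@isrc_init sh) [set sI] set0
    (match h sI (@isrc_init sh) with
     | Some x => [:: (sI, 0%R, x)]
     | None => [::]
     end).

Definition process (cf : config) (t : trans) : config :=
  let s' := tgt t in
  let old := if s' \in cf_known cf then gval (cf_Ip cf) s' else None in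
  let Ip' := @isrc_update sigma_p (cf_Ip cf) t in
  let Ih' := @isrc_update sh (cf_Ih cf) t in
  let known' := s' |: cf_known cf in
  match h s' Ih', gval Ip' s' with
  | Some hv, Some gv =>
      match old with
      | None => Config Ip' Ih' known' (cf_closed cf) ((s', gv, hv) :: cf_open cf)
      | Some o =>
          if Rlt_dec gv o
          then Config Ip' Ih' known' (cf_closed cf :\ s') ((s', gv, hv) :: cf_open cf)
          else Config Ip' Ih' known' (cf_closed cf) (cf_open cf)
      end
  | _, _ => Config Ip' Ih' known' (cf_closed cf) (cf_open cf)
  end.

Inductive parent_trace (i : pinfo) : S -> seq trans -> Prop :=
  | pt_init : parent_trace i sI [::]
  | pt_step s g t p :
      s <> sI -> i s = Some (g, Some t) -> parent_trace i (src t) p ->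
      parent_trace i s (rcons p t).

Inductive astate :=
  | Running of config
  | Returned of seq trans
  | Unsolvable.

Definition lt_ext (x : R) (y : option R) : Prop :=
  match y with None => True | Some y => (x < y)%R end.

Definition is_min_entry (q : seq (S * R * R)) (gh hh : R) : Prop :=
  List.Forall (fun e : S * R * R => (gh + hh <= e.1.2 + e.2)%R) q.

Inductive step : astate -> astate -> Prop :=
  | st_empty cf :
      cf_open cf = [::] -> step (Running cf) Unsolvable
  | st_closed cf q1 q2 s gh hh :
      cf_open cf = q1 ++ (s, gh, hh) :: q2 -> is_min_entry (cf_open cf) gh hh ->
      s \in cf_closed cf ->
      step (Running cf)
        (Running (Config (cf_Ip cf) (cf_Ih cf) (cf_known cf) (cf_closed cf) (q1 ++ q2)))
  | st_reeval cf q1 q2 s gh hh :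
      cf_open cf = q1 ++ (s, gh, hh) :: q2 -> is_min_entry (cf_open cf) gh hh ->
      s \notin cf_closed cf ->
      let Ip' := @isrc_refine sigma_p (cf_Ip cf) s in
      let Ih' := @isrc_refine sh (cf_Ih cf) s in
      reeval = true -> lt_ext hh (h s Ih') ->
      step (Running cf)
        (Running (Config Ip' Ih' (cf_known cf) (cf_closed cf)
           (match h s Ih', gval Ip' s with
            | Some x, Some g => (s, g, x) :: (q1 ++ q2)
            | _, _ => q1 ++ q2
            end)))
  | st_goal cf q1 q2 s gh hh p :
      cf_open cf = q1 ++ (s, gh, hh) :: q2 -> is_min_entry (cf_open cf) gh hh ->
      s \notin cf_closed cf ->
      let Ip' := @isrc_refine sigma_p (cf_Ip cf) s in
      let Ih' := @isrc_refine sh (cf_Ih cf) s in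
      ~ (reeval = true /\ lt_ext hh (h s Ih')) ->
      s \in SG -> parent_trace Ip' s p ->
      step (Running cf) (Returned p)
  | st_expand cf q1 q2 s gh hh ts :
      cf_open cf = q1 ++ (s, gh, hh) :: q2 -> is_min_entry (cf_open cf) gh hh ->
      s \notin cf_closed cf ->
      let Ip' := @isrc_refine sigma_p (cf_Ip cf) s in
      let Ih' := @isrc_refine sh (cf_Ih cf) s in
      ~ (reeval = true /\ lt_ext hh (h s Ih')) ->
      s \notin SG ->
      uniq ts -> (forall t, (t \in ts) = (t \in T) && (src t == s)) ->
      step (Running cf)
        (Running (foldl process
           (Config Ip' Ih' (cf_known cf) (s |: cf_closed cf) (q1 ++ q2)) ts)).

Inductive steps : astate -> astate -> Prop :=
  | steps_refl a : steps a a
  | steps_cons a b d : step a b -> steps b d -> steps a d.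

Definition dyn_astar_returns (p : seq trans) : Prop :=
  steps (Running init_config) (Returned p).

End Algo.
End DynamicAStar.

(* Main.v *)
Require Import Defs.
From mathcomp Require Import all_boot.
From Stdlib Require Import Reals Lra.
From Stdlib Require List.

Set Implicit Arguments.
Unset Strict Implicit.
Unset Printing Implicit Defensive.

Section Proofs.
Variables (S L : finType) (c : L -> R) (T : {set S * L * S})
          (sI : S) (SG : {set S}) (hC hA : S -> option R).
Hypotheses (c_ge0 : forall l, (0 <= c l)%R)
  (hCn : nonneg_heuristic hC) (hAn : nonneg_heuristic hA)
  (hCa : admissible c T SG hC) (hAa : admissible c T SG hA).

Local Open Scope R_scope.

Definition solvable (s : S) := exists q, is_solution_from T SG s q.

Lemma solv_h s i : solvable s -> exists x, h_lazy hC hA s i = Some x.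
Proof.
case=> q Hq; rewrite /h_lazy; case: (i s).
- by case: (hCa Hq) => x [-> _]; exists x.
- by case: (hAa Hq) => x [-> _]; exists x.
Qed.

Lemma h_cases s i x : h_lazy hC hA s i = Some x -> hC s = Some x \/ hA s = Some x.
Proof. by rewrite /h_lazy; case: (i s); [left|right]. Qed.

Lemma solv_prev (t : trans S L) : t \in T -> solvable (tgt t) -> solvable (src t).
Proof.
move=> HT [q [Hp He]]; exists (t :: q); split => //.
Qed.

Lemma adm_le s q x : is_solution_from T SG s q ->
  (hC s = Some x \/ hA s = Some x) -> x <= cost c q.
Proof.
move=> Hq [H|H].
- by case: (hCa Hq) => y [Hy Hl]; rewrite H in Hy; case: Hy => ->.
- by case: (hAa Hq) => y [Hy Hl]; rewrite H in Hy; case: Hy => ->.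
Qed.

Lemma h_ge0 s i x : h_lazy hC hA s i = Some x -> 0 <= x.
Proof. by move/h_cases => [H|H]; [apply: (hCn H)|apply: (hAn H)]. Qed.

Lemma is_path_rcons s (p : seq (trans S L)) (t : trans S L) : is_path T s p -> t \in T -> src t = path_end s p ->
  is_path T s (rcons p t).
Proof.
elim: p s => [|t0 p IH] s /=.
- by move=> _ HT Hs; rewrite /path_end /= in Hs.
- move=> [H1 [H2 H3]] HT Hs; split => //; split => //; apply: IH => //.
Qed.

Lemma path_end_rcons s (p : seq (trans S L)) (t : trans S L) : path_end s (rcons p t) = tgt t.
Proof. by rewrite /path_end map_rcons last_rcons. Qed.

Lemma cost_rcons (p : seq (trans S L)) (t : trans S L) : cost c (rcons p t) = cost c p + c (lbl t).
Proof. elim: p => [|t0 p IH] /=; [lra| rewrite IH; lra]. Qed.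


Definition good (i : pinfo S L) (t : trans S L) :=
  exists gu pu gt pt, i (src t) = Some (gu, pu) /\ i (tgt t) = Some (gt, pt) /\
    gt <= gu + c (lbl t).

Record Base (Ip : pinfo S L) (kn cl : {set S}) (op : seq (S * R * R)) : Prop := {
  b1 : forall s g0 t, Ip s = Some (g0, Some t) -> t \in T /\ tgt t = s /\
         exists g1 pt, Ip (src t) = Some (g1, pt) /\ g1 + c (lbl t) <= g0;
  b2 : exists g0 pt, Ip sI = Some (g0, pt) /\ g0 <= 0;
  b3 : forall s g0 pt, Ip s = Some (g0, pt) -> 0 <= g0;
  b4 : forall s, Ip s <> None -> s \in kn;
  b7 : forall u, u \in cl -> u \notin SG;
  b8 : forall s gh hh, List.In (s, gh, hh) op -> exists gs ps, Ip s = Some (gs, ps) /\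
         gs <= gh /\ (hC s = Some hh \/ hA s = Some hh);
  b9 : forall s gs ps, solvable s -> s \notin cl -> Ip s = Some (gs, ps) ->
         exists hh, List.In (s, gs, hh) op }.

Definition I6 (Ip : pinfo S L) (cl : {set S}) :=
  forall u, u \in cl -> Ip u <> None /\
    forall t, t \in T -> src t = u -> solvable (tgt t) -> good Ip t.

Lemma main_entry Ip kn cl op : Base Ip kn cl op -> I6 Ip cl ->
  forall q u a gu pu, is_path T u q -> path_end u q \in SG ->
  Ip u = Some (gu, pu) -> gu <= a ->
  exists e, List.In e op /\ e.1.2 + e.2 <= a + cost c q.
Proof.
move=> B H6; elim=> [|t q IH] u a gu pu Hp He Hu Ha.
- case Hc: (u \in cl).
  + by move: (b7 B Hc); rewrite /path_end /= in He; rewrite He.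
  + have Hs : solvable u by exists [::].
    case: (b9 B Hs (negbT Hc) Hu) => hh Hin.
    case: (b8 B Hin) => gs [ps [Hgs [_ Hh]]].
    have Hh' := adm_le (conj Hp He) Hh.
    exists (u, gu, hh); split => //=; simpl in Hh'; lra.
- case: Hp => [HT [Hsrc Hp]].
  have Hsol : solvable (tgt t) by exists q.
  case Hc: (u \in cl).
  + case: (H6 _ Hc) => _ /(_ t HT Hsrc Hsol) [gu' [pu' [gt [pt [E1 [E2 Hle]]]]]].
    rewrite Hsrc Hu in E1; case: E1 => ??; subst gu' pu'.
    have He' : path_end (tgt t) q \in SG by [].
    case: (IH _ (a + c (lbl t)) _ _ Hp He' E2 ltac:(lra)) => e [Hin Hle'].
    exists e; split => //=; lra.
  + have Hs : solvable u by exists (t :: q).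
    case: (b9 B Hs (negbT Hc) Hu) => hh Hin.
    case: (b8 B Hin) => gs [ps [Hgs [_ Hh]]].
    have Hh' := adm_le (s := u) (q := t :: q) (conj (conj HT (conj Hsrc Hp)) He) Hh.
    exists (u, gu, hh); split => //=; simpl in Hh'; lra.
Qed.

Lemma trace_ok Ip kn cl op s p : Base Ip kn cl op -> parent_trace sI Ip s p ->
  exists gs ps, Ip s = Some (gs, ps) /\ is_path T sI p /\ path_end sI p = s /\
    cost c p <= gs.
Proof.
move=> B; elim=> [|s0 g t p0 Hne Hs Htr IH].
- case: (b2 B) => g0 [pt [E _]]; exists g0, pt; do 3 split => //=.
  by have := b3 B E.
- case: IH => gs [ps [E [Hp [He Hc]]]].
  case: (b1 B Hs) => HT [Ht [g1 [pt [E1 Hle]]]].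
  rewrite E in E1; case: E1 => ??; subst g1 pt.
  exists g, (Some t); split => //; split; [|split].
  + by apply: is_path_rcons.
  + by rewrite path_end_rcons.
  + rewrite cost_rcons; lra.
Qed.

Lemma pu_other (Ip : pinfo S L) t x gs ps : Ip (src t) = Some (gs, ps) ->
  x != tgt t -> p_update c Ip t x = Ip x.
Proof. by move=> E Hx; rewrite /p_update E (negbTE Hx). Qed.

Lemma pu_tgt (Ip : pinfo S L) t gs ps : Ip (src t) = Some (gs, ps) ->
  exists gn pn, p_update c Ip t (tgt t) = Some (gn, pn) /\ gn <= gs + c (lbl t) /\
   (forall g' p', Ip (tgt t) = Some (g', p') -> gn <= g') /\
   (Ip (tgt t) = Some (gn, pn) \/ (gn = gs + c (lbl t) /\ pn = Some t /\
      forall g' p', Ip (tgt t) = Some (g', p') -> gs + c (lbl t) <= g')).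
Proof.
move=> E; rewrite /p_update E eqxx.
case E2: (Ip (tgt t)) => [[g' p']|].
- case: (Rle_dec (gs + c (lbl t)) g') => H.
  + exists (gs + c (lbl t)), (Some t); split; [done|split; [lra|split]].
    * by move=> g'' p'' [<- _].
    * right; split; [done|split; [done|]]; by move=> g'' p'' [<- _].
  + exists g', p'; split; [done|split; [lra|split]].
    * by move=> g'' p'' [<- _]; lra.
    * by left.
- exists (gs + c (lbl t)), (Some t); split; [done|split; [lra|split]] => //.
  by right.
Qed.

Lemma pu_mono (Ip : pinfo S L) t gs ps y gy py : Ip (src t) = Some (gs, ps) ->
  Ip y = Some (gy, py) -> exists gy' py', p_update c Ip t y = Some (gy', py') /\ gy' <= gy.
Proof.
move=> E Ey; case: (eqVneq y (tgt t)) => [Hy|Hne].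
- subst y; case: (pu_tgt E) => gn [pn [H1 [_ [H3 _]]]].
  exists gn, pn; split => //; exact: H3 Ey.
- by exists gy, py; rewrite (pu_other E Hne) Ey; split => //; lra.
Qed.

Lemma pu_vals (Ip : pinfo S L) t gs ps y v : Ip (src t) = Some (gs, ps) ->
  p_update c Ip t y = Some v -> Ip y = Some v \/
  (y = tgt t /\ v = (gs + c (lbl t), Some t) /\
     forall g' p', Ip (tgt t) = Some (g', p') -> gs + c (lbl t) <= g').
Proof.
move=> E; case: (eqVneq y (tgt t)) => [->|Hne].
- case: (pu_tgt E) => gn [pn [H1 [_ [_ [H4|[H4 [H5 H6]]]]]]]; rewrite H1 => -[<-].
  + by left.
  + by right; subst.
- by rewrite (pu_other E Hne); left.
Qed.

Lemma proc_char (Ip : pinfo S L) (Ih : isrc_I (sigma_lazy S L)) (kn cl : {set S}) (op : seq (S * R * R))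
  (t : trans S L) gs ps :
  Ip (src t) = Some (gs, ps) ->
  let P := process (sh := sigma_lazy S L) c sI (h_lazy hC hA) (Config Ip Ih kn cl op) t in
  exists gn pn, p_update c Ip t (tgt t) = Some (gn, pn) /\
  cf_Ip P = p_update c Ip t /\ cf_Ih P = Ih /\ cf_known P = tgt t |: kn /\
  (forall e, List.In e op -> List.In e (cf_open P)) /\
  (forall e, List.In e (cf_open P) -> List.In e op \/
      exists hv, e = (tgt t, gn, hv) /\ h_lazy hC hA (tgt t) Ih = Some hv) /\
  (forall u, u \in cf_closed P -> u \in cl) /\
  (forall u, u \in cl -> u \notin cf_closed P -> u = tgt t) /\
  (forall hv, h_lazy hC hA (tgt t) Ih = Some hv -> tgt t \notin cf_closed P ->
     (exists hh, List.In (tgt t, gn, hh) (cf_open P)) \/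
     (tgt t \notin cl /\ exists po, Ip (tgt t) = Some (gn, po))) /\
  (forall gu pu, h_lazy hC hA (tgt t) Ih <> None -> tgt t \in kn ->
     Ip (tgt t) = Some (gu, pu) -> gn < gu -> tgt t \notin cf_closed P).
Proof.
move=> E P.
case: (pu_tgt E) => gn [pn [H1 [H2 [H3 H4]]]].
exists gn, pn; split => //.
rewrite /P /process /=.
rewrite /gval H1 /=.
case Hh: (h_lazy hC hA (tgt t) Ih) => [hv|] /=; last first.
  split; first done. split; first done. split; first done.
  split; first by move=> e He.
  split; first by move=> e He; left.
  split; first by move=> u.
  split; first by move=> u ->.
  split; first by move=> ?.
  by move=> ? ? /(_ erefl).
case Hk: (tgt t \in kn) => /=; last first.
  split; first done. split; first done. split; first done.
  split; first by move=> e He; right.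
  split; first by move=> e /= [<-|He]; [right; exists hv|left].
  split; first by move=> u.
  split; first by move=> u ->.
  split; first by move=> ? _ _; left; exists hv; left.
  by move=> ? ? _.
case Ho: (Ip (tgt t)) => [[o po]|] /=; last first.
  split; first done. split; first done. split; first done.
  split; first by move=> e He; right.
  split; first by move=> e /= [<-|He]; [right; exists hv|left].
  split; first by move=> u.
  split; first by move=> u ->.
  split; first by move=> ? _ _; left; exists hv; left.
  by move=> ? ? _ _ [].
case: (Rlt_dec gn o) => Hlt /=.
- split; first done. split; first done. split; first done.
  split; first by move=> e He; right.
  split; first by move=> e /= [<-|He]; [right; exists hv|left].
  split; first by move=> u; rewrite in_setD1 => /andP[_ ->].
  split; first by move=> u Hu; rewrite in_setD1 Hu andbT negbK => /eqP.
  split; first by move=> ? _ _; left; exists hv; left.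
  by move=> *; rewrite in_setD1 eqxx.
- split; first done. split; first done. split; first done.
  split; first by move=> e He.
  split; first by move=> e He; left.
  split; first by move=> u.
  split; first by move=> u ->.
  split.
  + move=> ? _ Hn; right; split => //; exists po.
    have Hle := H3 _ _ Ho.
    by have -> : gn = o by lra.
  + move=> gu pu _ _ [??]; subst; lra.
Qed.

Definition J (s : S) (cf : config (sigma_lazy S L)) (rem : seq (trans S L)) :=
  Base (cf_Ip cf) (cf_known cf) (cf_closed cf) (cf_open cf) /\
  (forall u, u \in cf_closed cf -> cf_Ip cf u <> None /\
     forall t, t \in T -> src t = u -> solvable (tgt t) ->
       (u = s /\ t \in rem) \/ good (cf_Ip cf) t) /\
  cf_Ip cf s <> None /\ (forall t, t \in rem -> t \in T /\ src t = s).

Lemma process_J s cf t rem : J s cf (t :: rem) ->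
  J s (process (sh := sigma_lazy S L) c sI (h_lazy hC hA) cf t) rem.
Proof.
case: cf => Ip Ih kn cl op [B [H6 [Hs Hrem]]].
cbn [cf_Ip cf_known cf_closed cf_open] in B. cbn [cf_Ip cf_known cf_closed cf_open] in H6.
have [HT Hsrc] := Hrem t (mem_head _ _).
case E: (Ip s) Hs => [[gs ps]|] // _.
have E' : Ip (src t) = Some (gs, ps) by rewrite Hsrc.
have [gn' [pn' [Hgn' [H2 [H3 _]]]]] := pu_tgt E'.
case: (proc_char Ih kn cl op E')
  => gn [pn [Hgn [HIp [HIh [Hkn [Hop1 [Hop2 [Hcl [Hcl2 [HC3 HC4]]]]]]]]]].
rewrite Hgn in Hgn'; case: Hgn' => ??; subst gn' pn'.
rewrite /J HIp Hkn.
set P := process _ _ _ _ _ in Hop1 Hop2 Hcl Hcl2 HC3 HC4 *.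
split; [split|split; [|split]].
- move=> s0 g0 t0 H.
  case: (pu_vals E' H) => [Hold|[Hy [Hv _]]].
  + case: (b1 B Hold) => HT0 [Ht0 [g1 [pt [E1 Hle]]]].
    case: (pu_mono E' E1) => g1' [pt' [E1' Hle']].
    split => //; split => //; exists g1', pt'; split => //; lra.
  + case: Hv => -> ->; split => //; split => //.
    case: (pu_mono E' E') => g1' [pt' [E1' Hle']].
    exists g1', pt'; split => //; lra.
- case: (b2 B) => g0 [pt [E0 Hle]].
  case: (pu_mono E' E0) => g1' [pt' [E1' Hle']].
  exists g1', pt'; split => //; lra.
- move=> s0 g0 pt H.
  case: (pu_vals E' H) => [Hold|[Hy [Hv _]]].
  + exact: (b3 B Hold).
  + case: Hv => -> _; have := b3 B E'; have := c_ge0 (lbl t); lra.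
- move=> s0; case H: (p_update c Ip t s0) => [v|] // _.
  case: (pu_vals E' H) => [Hold|[Hy _]].
  + have Hn : Ip s0 <> None by rewrite Hold.
    have Hk := b4 B Hn.
    by rewrite in_setU1 Hk orbT.
  + by rewrite in_setU1 Hy eqxx.
- by move=> u /Hcl /(b7 B).
- move=> s0 gh hh /Hop2 [Hin|[hv [He Hh]]].
  + case: (b8 B Hin) => gs0 [ps0 [E0 [Hle Hhh]]].
    case: (pu_mono E' E0) => g1' [pt' [E1' Hle']].
    exists g1', pt'; split => //; split => //; lra.
  + case: He => -> -> ->; exists gn, pn; split => //; split; [lra|].
    exact: h_cases Hh.
- move=> s0 gs0 ps0 Hsol Hncl H.
  case: (eqVneq s0 (tgt t)) => [Hy|Hne].
  + subst s0; rewrite Hgn in H; case: H => ??; subst gs0 ps0.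
    case: (solv_h Ih Hsol) => hv Hh.
    case: (HC3 hv Hh Hncl) => // [[Hncl' [po Epo]]].
    case: (b9 B Hsol Hncl' Epo) => hh Hin; exists hh; exact: Hop1.
  + rewrite (pu_other E' Hne) in H.
    have Hncl' : s0 \notin cl.
      apply/negP => Hc; case Hc': (s0 \in cf_closed P); first by rewrite Hc' in Hncl.
      by move: Hne; rewrite (Hcl2 _ Hc (negbT Hc')) eqxx.
    case: (b9 B Hsol Hncl' H) => hh Hin; exists hh; exact: Hop1.
- move=> u Hu; have Hu' := Hcl _ Hu; case: (H6 _ Hu') => HIpu H6u.
  split.
    case Eu: (Ip u) HIpu => [[gu pu]|] // _.
    by case: (pu_mono E' Eu) => g1' [pt' [-> _]].
  move=> t0 HT0 Hs0 Hsol.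
  case: (H6u t0 HT0 Hs0 Hsol) => [[Hus]|Hg].
    rewrite in_cons => /orP[/eqP Ht0|Hin]; last by left.
    subst t0; right.
    case: (eqVneq (src t) (tgt t)) => [Heq|Hne].
    * exists gn, pn, gn, pn; rewrite Heq; split => //; split => //.
      have := c_ge0 (lbl t); lra.
    * exists gs, ps, gn, pn; rewrite (pu_other E' Hne); split => //.
  right; case: Hg => gu [pu [gt [pt [Eu [Et Hle]]]]].
  case: (pu_mono E' Et) => gt' [pt' [Et' Hle']].
  case: (eqVneq (src t0) (tgt t)) => [Heq|Hne].
  * exists gn, pn, gt', pt'; rewrite Heq Hgn; split => //; split => //.
    case: (Rlt_le_dec gn gu) => Hlt; last lra.
    exfalso.
    have Hsolu : solvable (tgt t) by rewrite -Heq; exact: solv_prev HT0 Hsol.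
    case: (solv_h Ih Hsolu) => hv Hh.
    have Hn : Ip (tgt t) <> None by rewrite -Heq Eu.
    have Hkn' := b4 B Hn.
    have := HC4 gu pu ltac:(by rewrite Hh) Hkn' ltac:(by rewrite -Heq) Hlt.
    by rewrite -Heq Hs0 Hu.
  * exists gu, pu, gt', pt'; rewrite (pu_other E' Hne); split => //; split => //; lra.
- by case: (pu_mono E' E) => g1' [pt' [-> _]].
- by move=> t0 Hin; apply: Hrem; rewrite in_cons Hin orbT.
Qed.

Definition Inv (cf : config (sigma_lazy S L)) :=
  Base (cf_Ip cf) (cf_known cf) (cf_closed cf) (cf_open cf) /\ I6 (cf_Ip cf) (cf_closed cf).

Lemma fold_J s rem cf : J s cf rem ->
  J s (foldl (process (sh := sigma_lazy S L) c sI (h_lazy hC hA)) cf rem) [::].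
Proof. by elim: rem cf => [|t rem IH] cf //= HJ; apply: IH; apply: process_J. Qed.

Lemma J_Inv s cf : J s cf [::] -> Inv cf.
Proof.
case=> B [H6 _]; split => // u Hu; case: (H6 u Hu) => H1 H2; split => // t HT Hs Hsol.
by case: (H2 t HT Hs Hsol) => // -[].
Qed.

Lemma in_mid (A : Type) (e x : A) q1 q2 :
  List.In e (q1 ++ x :: q2) -> e = x \/ List.In e (q1 ++ q2).
Proof.
intros H; apply List.in_app_or in H; destruct H as [H|[H|H]].
- right; apply List.in_or_app; left; exact H.
- left; symmetry; exact H.
- right; apply List.in_or_app; right; exact H.
Qed.

Lemma in_mid2 (A : Type) (e x : A) q1 q2 :
  List.In e (q1 ++ q2) -> List.In e (q1 ++ x :: q2).
Proof.
intros H; apply List.in_app_or in H; apply List.in_or_app; destruct H as [H|H].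
- left; exact H.
- right; right; exact H.
Qed.

Lemma base_open Ip kn cl op op' : Base Ip kn cl op ->
  (forall s gh hh, List.In (s, gh, hh) op' -> exists gs ps, Ip s = Some (gs, ps) /\
         gs <= gh /\ (hC s = Some hh \/ hA s = Some hh)) ->
  (forall s gs ps, solvable s -> s \notin cl -> Ip s = Some (gs, ps) ->
         exists hh, List.In (s, gs, hh) op') -> Base Ip kn cl op'.
Proof. by case=> *; split. Qed.

Lemma step_Inv cf cf' : Inv cf ->
  step (sh := sigma_lazy S L) c T sI SG (h_lazy hC hA) true (Running cf) (Running cf') -> Inv cf'.
Proof.
case: cf => Ip Ih kn cl op [B H6] Hst; inversion Hst; subst; cbn [cf_Ip cf_known cf_closed cf_open cf_Ih] in *.
- split => //=; apply: (base_open B).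
  + move=> s0 gh0 hh0 H; apply: (b8 B); try rewrite H1; apply: in_mid2; exact H.
  + move=> s0 gs ps Hsol Hncl Hs0.
    case: (b9 B Hsol Hncl Hs0) => hh0 Hin; try rewrite H1 in Hin.
    case: (in_mid Hin) => [E1|Hin'].
    * by case: E1 => E1 _ _; subst s0; rewrite H3 in Hncl.
    * by exists hh0.
- rewrite /Ip' /Ih' /= in H5 *.
  move: (fun s' : S => _) H5 => Ih2 H5.
  have Htail : forall e, List.In e (q1 ++ q2) -> List.In e
     (match h_lazy hC hA s Ih2 with
      | Some x => match gval Ip s with
                  | Some g => (s, g, x) :: q1 ++ q2 | None => q1 ++ q2 end
      | None => q1 ++ q2 end).
    by move=> e He; case: (h_lazy hC hA s Ih2) => [x|] //; case: (gval Ip s) => [g|] //; right.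
  split => //=; apply: (base_open B).
  + move=> s0 gh0 hh0.
    case Hh: (h_lazy hC hA s Ih2) => [x|]; case Hg: (gval Ip s) => [g|] /=;
      try (move=> H; apply: (b8 B); rewrite H1; apply: in_mid2; exact H).
    move=> [E|H]; last by apply: (b8 B); rewrite H1; apply: in_mid2; exact H.
    case: E => <- <- <-; move: Hg; rewrite /gval; case: (Ip s) => [[g0 p0]|] //= [<-].
    by exists g0, p0; split => //; split; [lra|apply: h_cases Hh].
  + move=> s0 gs ps Hsol Hncl Hs0.
    case: (b9 B Hsol Hncl Hs0) => hh0 Hin; rewrite H1 in Hin.
    case: (in_mid Hin) => [E1|Hin'].
    * case: E1 => E1 E2 _; subst s0 gs.
      case: (solv_h Ih2 Hsol) => x Hx; exists x; rewrite Hx /gval Hs0 /=; by left.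
    * by exists hh0; apply: Htail.
- rewrite /Ip' /Ih' /=.
  apply: (J_Inv (s := s)); apply: fold_J.
  have Hin0 : List.In (s, gh, hh) op by rewrite H1; apply: List.in_or_app; right; left.
  have [gs0 [ps0 [Es _]]] := b8 B Hin0.
  have Hs : Ip s <> None by rewrite Es.
  split; [|split; [|split]] => /=.
  + case: B => B1 B2 B3 B4 B7 B8 B9; split => //.
    * move=> u; rewrite in_setU1 => /orP[/eqP ->|Hu] //; exact: B7.
    * move=> s0 gh0 hh0 H; apply: B8; rewrite H1; apply: in_mid2; exact H.
    * move=> s0 gs ps Hsol; rewrite in_setU1 negb_or => /andP[Hne Hncl] Hs0.
      case: (B9 _ _ _ Hsol Hncl Hs0) => hh0 Hin; rewrite H1 in Hin.
      case: (in_mid Hin) => [E1|Hin']; last by exists hh0.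
      by case: E1 => E1 _ _; rewrite E1 eqxx in Hne.
  + move=> u; rewrite in_setU1 => /orP[/eqP ->|Hu].
    * split => // t HT Hst0 _; left; split => //; rewrite H8 HT Hst0 eqxx.
      done.
    * case: (H6 u Hu) => Hn Hg; split => // t HT Hst0 Hsol; right; exact: Hg.
  + done.
  + by move=> t; rewrite H8 => /andP[-> /eqP].
Qed.

Lemma init_Inv : Inv (init_config (sh := sigma_lazy S L) c sI (h_lazy hC hA)).
Proof.
rewrite /Inv /init_config /=; split; last by move=> u; rewrite in_set0.
split.
- by move=> s0 g0 t; case: (s0 == sI).
- by exists 0, None; rewrite eqxx; split => //; lra.
- by move=> s0 g0 pt; case: ifP => // _ [<- _]; lra.
- by move=> s0; case: ifP => [/eqP -> _|_ []]; rewrite ?set11.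
- by move=> u; rewrite in_set0.
- rewrite /h_lazy /=; case Hh: (hC sI) => [x|] /= s0 gh0 hh0 //.
  case => // -[<- <- <-].
  by exists 0, None; rewrite eqxx; split => //; split; [lra|left].
- move=> s0 gs ps Hsol _; case: ifP => // /eqP Es [<- _]; subst s0.
  case: Hsol => q Hq; case: (hCa Hq) => x [Hx _]; rewrite /h_lazy /= Hx; exists x; by left.
Qed.

Lemma goal_opt cf p : Inv cf ->
  step (sh := sigma_lazy S L) c T sI SG (h_lazy hC hA) true (Running cf) (Returned (sigma_lazy S L) p) ->
  optimal_solution c T sI SG p.
Proof.
case: cf => Ip Ih kn cl op [B H6] Hst; inversion Hst; subst; cbn [cf_Ip cf_known cf_closed cf_open cf_Ih] in *.
have Htr : parent_trace sI Ip s p by [].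
case: (trace_ok B Htr) => gs [ps [Es [Hp [He Hc]]]].
have Hin0 : List.In (s, gh, hh) op by rewrite H1; apply: List.in_or_app; right; left.
case: (b8 B Hin0) => gs' [ps' [Es' [Hle Hhh]]].
rewrite Es in Es'; case: Es' => ??; subst gs' ps'.
have Hhh0 : 0 <= hh by case: Hhh => H; [apply: (hCn H)|apply: (hAn H)].
split; first by split => //; rewrite He.
move=> q [Hq Hqe].
case: (b2 B) => g0 [pt [E0 Hg0]].
case: (main_entry B H6 Hq Hqe E0 Hg0) => e [Hin Hle'].
have := proj1 (List.Forall_forall _ _) H2 e Hin => /= Hf.
lra.
Qed.

Lemma steps_stuck_U d : steps (sh := sigma_lazy S L) c T sI SG (h_lazy hC hA) true (Unsolvable (sigma_lazy S L)) d ->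
  d = (Unsolvable (sigma_lazy S L)).
Proof. by move=> H; inversion H => //; inversion H0. Qed.

Lemma steps_stuck_R p d : steps (sh := sigma_lazy S L) c T sI SG (h_lazy hC hA) true (Returned (sigma_lazy S L) p) d ->
  d = Returned (sigma_lazy S L) p.
Proof. by move=> H; inversion H => //; inversion H0. Qed.

Lemma run a d : steps (sh := sigma_lazy S L) c T sI SG (h_lazy hC hA) true a d ->
  forall cf p, a = Running cf -> Inv cf -> d = Returned (sigma_lazy S L) p -> optimal_solution c T sI SG p.
Proof.
elim=> [a0|a0 b d0 Hst Hs IH] cf p Ea I Ed; subst; first by [].
case: b Hst Hs IH => [cf'|p0|] Hst Hs IH.
- exact: (IH cf' p erefl (step_Inv I Hst) erefl).
- by move: (steps_stuck_R Hs) => [->]; exact: goal_opt I Hst.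
- by move: (steps_stuck_U Hs).
Qed.

End Proofs.

Theorem theorem11 (S L : finType) (c : L -> R) (T : {set S * L * S})
    (sI : S) (SG : {set S}) (hC hA : S -> option R) :
  (forall l, (0 <= c l)%R) ->
  nonneg_heuristic hC -> nonneg_heuristic hA ->
  admissible c T SG hC -> admissible c T SG hA ->
  forall p : seq (trans S L),
    @dyn_astar_returns S L c T sI SG (sigma_lazy S L) (h_lazy hC hA) true p ->
    optimal_solution c T sI SG p.
Proof.
move=> Hc HCn HAn HCa HAa p Hr.
exact: (run Hc HCn HAn HCa HAa Hr erefl (init_Inv sI hA HCa) erefl).
Qed.
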